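(* For all $n\geq 0$, $$d_n=\sum_{k=0}^{n}(-1)^{n-k}\binom{n}{k}m_k,$$ where $d_n$ is the number of symmetric Dyck paths of length $2n$ and $m_k$ is the number of symmetric Motzkin paths of length $2k$.
   Context: Steps: $U=(1,1)$, $D=(1,-1)$, $h=(1,0)$. A Dyck path of length $2n$ is a lattice path from $(0,0)$ to $(2n,0)$ using steps $U,D$ that never goes below the $x$-axis; a Motzkin path of length $2n$ is the same but steps $U,D,h$ are allowed. Such a path with step sequence $s_1\cdots s_{2n}$ is symmetric if for every $i$, $s_{2n+1-i}$ is the mirror of $s_i$ (mirror of $U$ is $D$, of $D$ is $U$, of $h$ is $h$), i.e. the path is invariant under reflection in the line $x=n$. *)

(* Defs.v *)
From HB Require Import structures.
From mathcomp Require Import all_boot all_order all_algebra.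
Set Implicit Arguments. Unset Strict Implicit. Unset Printing Implicit Defensive.
Import GRing.Theory Num.Theory.
Local Open Scope ring_scope.

(* Steps U = (1,1), D = (1,-1), h = (1,0). *)
Inductive step := U | D | H.

Definition step_code (s : step) : 'I_3 :=
  match s with U => inord 0 | D => inord 1 | H => inord 2 end.
Definition step_decode (i : 'I_3) : step :=
  match val i with 0 => U | 1 => D | _ => H end.
Lemma step_codeK : cancel step_code step_decode.
Proof. by case; rewrite /step_decode /= inordK. Qed.
HB.instance Definition _ := Equality.copy step (can_type step_codeK).
HB.instance Definition _ := Finite.copy step (can_type step_codeK).

Definition dy (s : step) : int := match s with U => 1 | D => -1 | H => 0 end.

(* mirror image of a step under reflection in a vertical line *)
Definition mirror (s : step) : step := match s with U => D | D => U | H => H end.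

Definition height (p : seq step) (i : nat) : int := \sum_(x <- take i p) dy x.

Definition nonneg_bridge (p : seq step) : bool :=
  [forall i : 'I_(size p).+1, (0 <= height p i)%R] && (height p (size p) == 0%R).

Definition dyck (p : seq step) : bool := nonneg_bridge p && (H \notin p).
Definition motzkin (p : seq step) : bool := nonneg_bridge p.

(* symmetric: s_{N+1-i} is the mirror of s_i (1-indexed), N = size p *)
Definition sym_path (p : seq step) : bool :=
  [forall i : 'I_(size p), nth H p (size p - 1 - i)%N == mirror (nth H p i)].

Definition d_num (n : nat) : nat :=
  #|[set p : (n.*2).-tuple step | dyck p && sym_path p]|.

Definition m_num (n : nat) : nat :=
  #|[set p : (n.*2).-tuple step | motzkin p && sym_path p]|.

(* Main.v *)
Require Import Defs.
From mathcomp Require Import all_boot all_order all_algebra.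
From mathcomp Require Import ring zify.
Import Order.TTheory GRing.Theory Num.Theory.
Local Open Scope ring_scope.

Fixpoint words n : seq (seq step) :=
  if n is n'.+1 then [seq x :: w | x <- [:: U; D; H], w <- words n'] else [:: [::]].

Lemma wordsS n : words n.+1 = [seq U :: w | w <- words n] ++ [seq D :: w | w <- words n] ++ [seq H :: w | w <- words n].
Proof. by rewrite /= cats0. Qed.

Lemma mem_words n w : (w \in words n) = (size w == n).
Proof.
elim: n w => [|n IH] [|x w] //=.
- by rewrite cats0 !mem_cat; apply/negP; case/or3P => /mapP [v _].
- rewrite cats0 !mem_cat; apply/idP/idP.
  + by case/or3P => /mapP [v Hv [_ ->]]; rewrite eqSS -IH.
  + rewrite eqSS -IH => Hw; case: x.
    * by rewrite map_f.
    * by rewrite map_f ?orbT.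
    * by rewrite map_f ?orbT.
Qed.

Lemma words_uniq n : uniq (words n).
Proof.
elim: n => [|n IH] //.
change (uniq [seq x :: w | x <- [:: U; D; H], w <- words n]).
apply: allpairs_uniq => //.
  by rewrite /= !inE; apply/and3P; split => //; [apply/norP; split|]; apply/eqP.

by move=> [a b] [c d] _ _ /= [-> ->].
Qed.

Lemma card_words m (P : pred (seq step)) :
  #|[set p : m.-tuple step | P p]| = count P (words m).
Proof.
rewrite cardsE cardE -size_filter -(size_map val).
apply: perm_size; apply: uniq_perm.
- by rewrite map_inj_uniq ?enum_uniq //; exact: val_inj.
- by rewrite filter_uniq // words_uniq.
move=> w; rewrite mem_filter mem_words; apply/mapP/idP.
- by move=> [t Ht ->]; rewrite mem_enum in Ht; rewrite size_tuple eqxx andbT.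
- case/andP => HP Hw; exists (Tuple Hw) => //.
  by rewrite mem_enum.
Qed.

Lemma count_wordsS (P : pred (seq step)) n :
  count P (words n.+1) = (count (fun w => P (U :: w)) (words n) +
     count (fun w => P (D :: w)) (words n) + count (fun w => P (H :: w)) (words n))%N.
Proof. by rewrite wordsS !count_cat !count_map addnA. Qed.


Fixpoint pre (h : int) (w : seq step) : bool :=
  match w with [::] => 0 <= h | x :: w' => (0 <= h) && pre (h + dy x) w' end.
Definition S (w : seq step) : int := \sum_(x <- w) dy x.

Lemma S_cons x w : S (x :: w) = dy x + S w.
Proof. by rewrite /S big_cons. Qed.
Lemma S_cat a b : S (a ++ b) = S a + S b.
Proof. by rewrite /S big_cat. Qed.
Lemma S_rev a : S (rev a) = S a.
Proof. by apply: perm_big; rewrite perm_rev perm_refl. Qed.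
Lemma dy_mirror x : dy (mirror x) = - dy x.
Proof. by case: x => //=; rewrite ?opprK ?oppr0. Qed.
Lemma S_mirror a : S (map mirror a) = - S a.
Proof.
elim: a => [|x a IH]; first by rewrite /S big_nil oppr0.
by rewrite /= !S_cons IH dy_mirror opprD.
Qed.

Lemma preP h p : reflect (forall i, (i <= size p)%N -> 0 <= h + S (take i p)) (pre h p).
Proof.
elim: p h => [|x p IH] h /=.
- apply: (iffP idP).
  + by move=> Hh i _ /=; rewrite /S big_nil addr0.
  + by move=> /(_ 0%N (leqnn _)) /=; rewrite /S big_nil addr0.
- apply: (iffP andP).
  + move=> [Hh /IH Hp] [|i] Hi; first by rewrite take0 /S big_nil addr0.
    by rewrite /= S_cons addrA; apply: Hp.
  + move=> Hp; split.
    * by have := Hp 0%N (leq0n _); rewrite take0 /S big_nil addr0.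
    * apply/IH => i Hi; have := Hp i.+1 Hi; by rewrite /= S_cons addrA.
Qed.

Lemma nb_pre p : nonneg_bridge p = pre 0 p && (S p == 0).
Proof.
rewrite /nonneg_bridge /height take_size; congr (_ && _).
apply/forallP/preP.
- move=> Hf i Hi; have := Hf (Ordinal (n:=(size p).+1) (m:=i) Hi); by rewrite add0r.
- by move=> Hp i; rewrite -[X in _ <= X]add0r; apply: Hp; rewrite -ltnS.
Qed.

Lemma pre_cat h a b : pre h (a ++ b) = pre h a && pre (h + S a) b.
Proof.
elim: a h => [|x a IH] h /=.
- rewrite /S big_nil addr0; case: b => [|y b] /=; first by rewrite andbb.
  by rewrite andbA andbb.
- by rewrite IH S_cons addrA andbA.
Qed.

Lemma pre_head h w : pre h w -> 0 <= h.
Proof. by case: w => [|x w] //= /andP []. Qed.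

Lemma pre_back h w : pre (h + S w) (rev (map mirror w)) = pre h w.
Proof.
elim: w h => [|x w IH] h; first by rewrite /= /S big_nil addr0.
rewrite /= rev_cons -cats1 pre_cat S_cons addrA IH S_rev S_mirror.
have -> : h + dy x + S w + - S w = h + dy x by ring.
rewrite /= dy_mirror.
have -> : h + dy x + - dy x = h by ring.
case E: (pre (h + dy x) w) => /=; last by rewrite andbF.
by rewrite (pre_head _ _ E) andbT.
Qed.

Definition fold (w : seq step) := w ++ rev (map mirror w).

Lemma nb_fold w : nonneg_bridge (fold w) = pre 0 w.
Proof.
rewrite nb_pre /fold pre_cat -[0 + S w]/(0 + S w) pre_back S_cat S_rev S_mirror.
by rewrite addrN eqxx andbb andbT.
Qed.

Lemma mirrorK : involutive mirror.
Proof. by case. Qed.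

Lemma H_fold w : (H \in fold w) = (H \in w).
Proof.
rewrite /fold mem_cat mem_rev.
have -> : (H \in map mirror w) = (H \in w).
  by rewrite -{1}[H]/(mirror H) (mem_map (inv_inj mirrorK)).
by rewrite orbb.
Qed.

Lemma sym_rev p : sym_path p = (rev p == map mirror p).
Proof.
rewrite /sym_path; apply/forallP/eqP.
- move=> Hf; apply: (eq_from_nth (x0:=H)); first by rewrite size_rev size_map.
  move=> i; rewrite size_rev => Hi.
  rewrite nth_rev // (nth_map H) //.
  have := Hf (Ordinal Hi); move/eqP => /= <-.
  by congr nth; lia.
- move=> E i; apply/eqP.
  have Hi := ltn_ord i.
  have := congr1 (fun s => nth H s i) E => /=.
  rewrite nth_rev // (nth_map H) // => <-.
  by congr nth; lia.
Qed.

Lemma sym_fold w : sym_path (fold w).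
Proof.
rewrite sym_rev /fold rev_cat revK map_cat map_rev.
by rewrite (mapK mirrorK).
Qed.

Lemma fold_take p m : size p = m.*2 -> sym_path p -> fold (take m p) = p.
Proof.
move=> Hs; rewrite sym_rev => /eqP E.
rewrite /fold; rewrite -{3}(cat_take_drop m p); congr (_ ++ _).
have Ht : size (take m p) = m by rewrite size_takel // Hs -addnn leq_addr.
have Hd : size (drop m p) = m by rewrite size_drop; lia.
move: E; rewrite -{1 2}(cat_take_drop m p) rev_cat map_cat => /eqP.
rewrite eqseq_cat; last by rewrite size_rev size_map Ht Hd.
case/andP => /eqP E _.
by rewrite -E revK.
Qed.

Lemma fold_inj : injective fold.
Proof.
move=> a b E.
have : size a = size b.
  have := congr1 size E; rewrite /fold !size_cat !size_rev !size_map; lia.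
move=> Hs; move/eqP: E; rewrite /fold eqseq_cat //; by case/andP => /eqP.
Qed.

Lemma count_sym (P : pred (seq step)) m :
  count (fun p => P p && sym_path p) (words m.*2) = count (fun w => P (fold w)) (words m).
Proof.
rewrite -!size_filter -[in RHS](size_map fold).
apply: perm_size; apply: uniq_perm.
- by rewrite filter_uniq // words_uniq.
- by rewrite (map_inj_uniq fold_inj) filter_uniq // words_uniq.
move=> p; rewrite mem_filter mem_words; apply/idP/mapP.
- case/andP => /andP [HP Hsym] /eqP Hs.
  exists (take m p); last by rewrite fold_take.
  by rewrite mem_filter mem_words fold_take // HP /= size_takel // Hs -addnn leq_addr.
- move=> [w]; rewrite mem_filter mem_words => /andP [HP /eqP Hw] ->.
  rewrite HP sym_fold /fold size_cat size_rev size_map Hw; apply/eqP; lia.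
Qed.


Definition A n h := count (fun w => pre h w && (H \notin w)) (words n).
Definition B n h := count (pre h) (words n).

Lemma HU : (H == U) = false. Proof. by apply/eqP. Qed.
Lemma HD : (H == D) = false. Proof. by apply/eqP. Qed.

Lemma A_S n h : A n.+1 h = if 0 <= h then (A n (h + dy U) + A n (h + dy D))%N else 0%N.
Proof.
rewrite /A count_wordsS.
have -> : count (fun w => pre h (H :: w) && (H \notin H :: w)) (words n) = 0%N.
  by apply/eqP; rewrite -leqn0 leqNgt -has_count; apply/hasP => [[w _]]; rewrite inE eqxx andbF.
rewrite addn0; case: ifP => Hh.
- by congr addn; apply: eq_count => w; rewrite inE ?HU ?HD /= Hh.
- by rewrite !(@eq_count _ _ pred0) ?count_pred0 // => w; rewrite /= Hh.
Qed.

Lemma B_S n h : B n.+1 h = if 0 <= h then (B n (h + dy U) + B n (h + dy D) + B n h)%N else 0%N.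
Proof.
rewrite /B count_wordsS /=; case: ifP => Hh.
- by rewrite addr0.
- by rewrite /= !count_pred0.
Qed.

Lemma A0 h : A 0 h = (0 <= h). Proof. by rewrite /A /=; case: (0 <= h). Qed.
Lemma B0 h : B 0 h = (0 <= h). Proof. by rewrite /B /=; case: (0 <= h). Qed.

Lemma B_neg n h : h < 0 -> B n h = 0%N.
Proof. by move=> Hh; case: n => [|n]; rewrite ?B0 ?B_S leNgt Hh. Qed.

Definition E n h : int := \sum_(0 <= k < n.+1) (-1) ^+ k * ('C(n, k) * B k h)%:Z.

Lemma shift_last (F : nat -> int) n :
  \sum_(0 <= k < n.+1) F k.+1 = \sum_(0 <= k < n) F k.+1 + F n.+1.
Proof. by rewrite big_nat_recr. Qed.

Lemma E_S n h : 0 <= h -> E n.+1 h = - (E n (h + dy U) + E n (h + dy D)).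
Proof.
move=> Hh; rewrite /E big_nat_recl //.
under eq_big_nat => k _ do rewrite binS mulnDl PoszD mulrDr.
rewrite big_split /=.
have HX : (-1) ^+ 0 * ('C(n.+1, 0) * B 0 h)%:Z +
   \sum_(0 <= i < n.+1) (-1) ^+ i.+1 * ('C(n, i.+1) * B i.+1 h)%:Z = E n h.
  rewrite (shift_last (fun i => (-1) ^+ i * ('C(n, i) * B i h)%:Z)) (bin_small (ltnSn n)) mul0n mulr0 addr0.
  by rewrite /E big_nat_recl // !bin0.
have HS2 : \sum_(0 <= i < n.+1) (-1) ^+ i.+1 * ('C(n, i) * B i.+1 h)%:Z =
   - (E n (h + dy U) + E n (h + dy D) + E n h).
  rewrite /E -!big_split -sumrN; apply: eq_big_nat => k _.
  by rewrite B_S Hh exprS !mulnDr !PoszD /=; ring.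
rewrite addrA HX HS2; ring.
Qed.

Lemma sign_split n k : (k <= n)%N -> (-1) ^+ (n - k) = (-1) ^+ n * (-1) ^+ k :> int.
Proof.
move=> Hk; rewrite -{2}(subnK Hk) exprD -mulrA -exprD addnn -mul2n exprM sqrrN !expr1n.
by rewrite mulr1.
Qed.

Lemma A_E n h : (A n h)%:Z = (-1) ^+ n * E n h.
Proof.
elim: n h => [|n IH] h.
- by rewrite A0 /E big_nat1 B0 bin0 !expr0 mul1n !mul1r.
- rewrite A_S; case: ifP => Hh.
  + by rewrite PoszD !IH E_S // exprS; ring.
  + rewrite /E big1_seq ?mulr0 // => k _; rewrite B_neg ?muln0 ?mulr0 //.
    by rewrite ltNge Hh.
Qed.

Lemma d_A n : d_num n = A n 0.
Proof.
rewrite /d_num (card_words _ (fun p => dyck p && sym_path p)) (count_sym dyck) /A; apply: eq_count => w.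
by rewrite /dyck nb_fold H_fold.
Qed.

Lemma m_B n : m_num n = B n 0.
Proof.
rewrite /m_num (card_words _ (fun p => motzkin p && sym_path p)) (count_sym motzkin) /B; apply: eq_count => w.
by rewrite /motzkin nb_fold.
Qed.

Theorem theorem3p2 (n : nat) :
  (d_num n)%:Z = \sum_(0 <= k < n.+1) (-1) ^+ (n - k) * ('C(n, k) * m_num k)%:Z.
Proof.
rewrite d_A A_E /E big_distrr /=; apply: eq_big_nat => k Hk.
by rewrite m_B sign_split ?mulrA //; lia.
Qed.
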